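(* Fix $m\ge1$ and let $F_m\subseteq P$ be the set of classes $[f]$ where $f$ is a multicolored forest of corank $m$. Any two elements $[f_1],[f_2]\in F_m$ have a least upper bound $[f_1]\vee[f_2]$ in $(F_m,\le)$. If $[f_1]$ and $[f_2]$ can both be represented by elementary multicolored forests, then so can $[f_1]\vee[f_2]$.
   Context: Let $\mathfrak C=\{0,1\}^{\omega}$, $S$ a nonempty set, $G$ a subgroup of the symmetric group of $S$, and $\mathfrak C^S$ the space of functions $S\to\mathfrak C$. For $\psi\colon S\to\{0,1\}^*$ with $\psi(s)=\varnothing$ for all but finitely many $s$, the dyadic brick $B(\psi)$ is the set of $\kappa\in\mathfrak C^S$ with $\psi(s)$ a prefix of $\kappa(s)$ for all $s$; $\Phi_\psi(\kappa)(s)=\psi(s)\cdot\kappa(s)$ is the canonical homeomorphism $\mathfrak C^S\to B(\psi)$; for $\gamma\in G$, $\tau_\gamma(\kappa)(s)=\kappa(\gamma^{-1}s)$, and the twist homeomorphism $B(\varphi)\to B(\psi)$ associated to $\gamma$ is $\Phi_\psi\tau_\gamma\Phi_\varphi^{-1}$. For $m\ge1$, let $\mathfrak C^S(m)=\mathfrak C^S_1\sqcup\dots\sqcup\mathfrak C^S_m$ be a disjoint union of $m$ copies of $\mathfrak C^S$, with $\mathfrak C^S(1)=\mathfrak C^S$. A dyadic brick in $\mathfrak C^S(m)$ is a dyadic brick in one of the cubes; canonical and twist homeomorphisms between bricks in possibly different cubes are defined via the identifications of each cube with $\mathfrak C^S$. $S\mathcal V_G$ is the set of homeomorphisms $h\colon\mathfrak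 C^S(m)\to\mathfrak C^S(n)$ ($m,n\ge1$) for which there are partitions of $\mathfrak C^S(m)$ and $\mathfrak C^S(n)$ into the same number of dyadic bricks $B_i$, $B_i'$ and $\gamma_i\in G$ such that $h$ maps each $B_i$ to $B_i'$ by the twist homeomorphism associated to $\gamma_i$; $n$ is the rank and $m$ the corank of $h$. For $\sigma\in\Sigma_n$, $p_\sigma$ maps each $\mathfrak C^S_i$ to $\mathfrak C^S_{\sigma(i)}$ by the identity identification; a twisted permutation of $\mathfrak C^S(n)$ is $(\tau_{\gamma_1}\oplus\dots\oplus\tau_{\gamma_n})p_\sigma$ (where $\oplus$ applies maps to consecutive cubes), and these form a group $\mathcal G(n)\cong G\wr\Sigma_n$. A very elementary expansion of a partition $\mathcal P$ of $\mathfrak C^S(m)$ into dyadic bricks is a partition $\mathcal P'$ into dyadic bricks such that every brick of $\mathcal P$ is a union of at most two bricks of $\mathcal P'$; a dyadic partition of $\mathfrak C^S(m)$ is one obtained from $\{\mathfrak C^S_1,\dots,\mathfrak C^S_m\}$ by finitely many very elementary expansions. A multicolored forest is a homeomorphism $f\colon\mathfrak C^S(m)\to\mathfrak C^S(n)$ mapping the bricks $B_1,\dots,B_n$ of some dyadic partition of $\mathfrak C^S(m)$ onto $\mathfrak C^S_1,\dots,\mathfrak C^S_n$ respectively by canonical homeomorphisms. A dyadic brick $B(\psi)$ is elementary if $\psi(s)\in\{\varnothing,0,1\}$ for all $s\in S$; a multicolored forest is elementary if the bricks of its dyadic partition are all elementary. For $h\in S\mathcal V_G$ of rank $n$ write $[h]=\mathcal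 G(n)h$, and let $P$ be the set of all such classes. For $v,w\in P$, $v\le w$ means there exist $h\in S\mathcal V_G$ and a multicolored forest $f$ with $v=[h]$ and $w=[fh]$; this is a partial order. *)

(* Defs.v *)
From mathcomp Require Import ssreflect ssrfun ssrbool eqtype ssrnat seq fintype.
From Stdlib Require List.

Set Implicit Arguments.
Unset Strict Implicit.
Unset Printing Implicit Defensive.

Definition Cantor := nat -> bool.

Definition pre (w : seq bool) (x : Cantor) : Cantor :=
  fun k => if k < size w then nth false w k else x (k - size w).

Definition prefix_of (w : seq bool) (x : Cantor) : Prop :=
  forall k, k < size w -> x k = nth false w k.

Definition is_perm_subgroup (S : Type) (G : (S -> S) -> Prop) : Prop :=
  [/\ (forall g, G g -> bijective g),
      G id,
      (forall g h, G g -> G h -> G (g \o h))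
    & (forall g g', G g -> cancel g g' -> cancel g' g -> G g')].

Section Cubes.
Variable S : Type.

Definition cube := S -> Cantor.
(* a point of C^S(m) = C^S_1 ⊔ ... ⊔ C^S_m : (index of the cube, point) *)
Definition pt (m : nat) := ('I_m * cube)%type.
(* a (candidate) dyadic brick in C^S(m): cube index and psi : S -> {0,1}^* *)
Definition brick (m : nat) := ('I_m * (S -> seq bool))%type.

Definition fin_supp (psi : S -> seq bool) : Prop :=
  exists l : seq S, forall s, psi s <> [::] -> List.In s l.

Definition in_brick m (b : brick m) (x : pt m) : Prop :=
  x.1 = b.1 /\ forall s, prefix_of (b.2 s) (x.2 s).

Definition canon m (b : brick m) (k : cube) : pt m :=
  (b.1, fun s => pre (b.2 s) (k s)).

Definition is_partition m k (P : 'I_k -> brick m) : Prop :=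
  (forall j, fin_supp (P j).2) /\ (forall x : pt m, exists! j, in_brick (P j) x).

Definition vel_expansion m k k' (P : 'I_k -> brick m) (P' : 'I_k' -> brick m) :
  Prop :=
  is_partition P' /\
  forall j, exists j1 j2, forall x,
      in_brick (P j) x <-> (in_brick (P' j1) x \/ in_brick (P' j2) x).

Definition cubes_partition m : 'I_m -> brick m := fun i => (i, fun _ => [::]).

Inductive dyadic (m : nat) : forall k : nat, ('I_k -> brick m) -> Prop :=
| dyadic_base : @dyadic m m (@cubes_partition m)
| dyadic_step k (P : 'I_k -> brick m) k' (P' : 'I_k' -> brick m) :
    @dyadic m k P -> vel_expansion P P' -> @dyadic m k' P'.

Definition forest m n (f : pt m -> pt n) : Prop :=
  exists P : 'I_n -> brick m, dyadic P /\
    forall j (k : cube), f (canon (P j) k) = (j, k).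

Definition elem_forest m n (f : pt m -> pt n) : Prop :=
  exists P : 'I_n -> brick m, dyadic P /\
    (forall j s, size ((P j).2 s) <= 1) /\
    forall j (k : cube), f (canon (P j) k) = (j, k).

Variable G : (S -> S) -> Prop.

(* h maps B(phi) onto B(psi) by the twist homeomorphism Phi_psi tau_g Phi_phi^-1,
   where tau_g(kappa)(s) = kappa(g^-1 s), written inverse-free at s' = g s *)
Definition twists m n (h : pt m -> pt n) (b : brick m) (b' : brick n) (g : S -> S)
  : Prop :=
  forall k : cube, (h (canon b k)).1 = b'.1 /\
    forall s, (h (canon b k)).2 (g s) = pre (b'.2 (g s)) (k s).

Definition sv m n (h : pt m -> pt n) : Prop :=
  0 < m /\ 0 < n /\ bijective h /\
  exists k (B : 'I_k -> brick m) (B' : 'I_k -> brick n) (g : 'I_k -> S -> S),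
    [/\ is_partition B, is_partition B', (forall j, G (g j))
      & forall j, twists h (B j) (B' j) (g j)].

(* twisted permutation (tau_{g_1} + ... + tau_{g_n}) p_sigma of C^S(n) *)
Definition twisted_perm n (q : pt n -> pt n) : Prop :=
  exists (sigma : 'I_n -> 'I_n) (g : 'I_n -> S -> S),
    [/\ bijective sigma, (forall i, G (g i))
      & forall i (k : cube), (q (i, k)).1 = sigma i /\
          forall s, (q (i, k)).2 (g (sigma i) s) = k s].

Definition same_class m n (h1 h2 : pt m -> pt n) : Prop :=
  exists q, twisted_perm q /\ forall x, h2 x = q (h1 x).

Definition class_le m n p (h1 : pt m -> pt n) (h2 : pt m -> pt p) : Prop :=
  exists (h : pt m -> pt n) (f : pt n -> pt p),
    [/\ sv h, forest f, same_class h1 h & same_class h2 (fun x => f (h x))].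

Definition is_lub_Fm m n1 n2 n (f1 : pt m -> pt n1) (f2 : pt m -> pt n2)
  (g : pt m -> pt n) : Prop :=
  [/\ forest g, class_le f1 g, class_le f2 g
    & forall n' (f : pt m -> pt n'), forest f ->
        class_le f1 f -> class_le f2 f -> class_le g f].

End Cubes.

(* Main.v *)
Require Import Defs.
From mathcomp Require Import ssreflect ssrfun ssrbool eqtype ssrnat seq fintype.
From Stdlib Require Import Classical ClassicalEpsilon FunctionalExtensionality.
Set Implicit Arguments. Unset Strict Implicit. Unset Printing Implicit Defensive.

Lemma pre_nil (x : Cantor) : pre [::] x = x.
Proof. apply: functional_extensionality => t; by rewrite /pre /= subn0. Qed.

Lemma prefix_pre w x : prefix_of w (pre w x).
Proof. by move=> t ht; rewrite /pre ht. Qed.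

Definition shift (n : nat) (x : Cantor) : Cantor := fun t => x (t + n).

Lemma shift_pre w x : shift (size w) (pre w x) = x.
Proof.
apply: functional_extensionality => t; rewrite /shift /pre.
by rewrite ltnNge leq_addl /= addnK.
Qed.

Lemma pre_shift w x : prefix_of w x -> pre w (shift (size w) x) = x.
Proof.
move=> H; apply: functional_extensionality => t; rewrite /shift /pre.
case: ifP => ht; first by rewrite H.
by rewrite subnK // leqNgt ht.
Qed.

Definition compat (u v : seq bool) :=
  forall t, t < size v -> t < size u -> nth false v t = nth false u t.

Lemma pre_prefix u v x : compat u v ->
  (prefix_of u (pre v x) <-> prefix_of (drop (size v) u) x).
Proof.
move=> Hc; split.
- move=> H t; rewrite size_drop => ht.
  have h1 : t + size v < size u by rewrite addnC -ltn_subRL.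
  have := H _ h1; rewrite /pre ltnNge leq_addl /= addnK => ->.
  by rewrite nth_drop addnC.
- move=> H t ht; rewrite /pre; case: ifP => htv.
  + by rewrite Hc.
  + have hvt : size v <= t by rewrite leqNgt htv.
    rewrite H; first by rewrite nth_drop subnKC.
    by rewrite size_drop ltn_sub2r // (leq_ltn_trans hvt ht).
Qed.

Definition sprefix (u v : seq bool) := size u <= size v /\ compat v u.

Lemma in_canon S m (b : brick S m) k : in_brick b (canon b k).
Proof. by split => // s; apply: prefix_pre. Qed.

Definition decode S m (b : brick S m) (x : pt S m) : cube S :=
  fun s => shift (size (b.2 s)) (x.2 s).

Lemma canon_decode S m (b : brick S m) x : in_brick b x -> canon b (decode b x) = x.
Proof.
case=> h1 h2; case: x h1 h2 => i x /= -> h2; rewrite /canon; congr pair.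
by apply: functional_extensionality => s; rewrite /decode /= pre_shift.
Qed.

Lemma decode_canon S m (b : brick S m) k : decode b (canon b k) = k.
Proof. by apply: functional_extensionality => s; rewrite /decode /= shift_pre. Qed.

Lemma prefix_trans_short u v x y : prefix_of u x -> prefix_of v x ->
  size v <= size u -> prefix_of u y -> prefix_of v y.
Proof.
move=> hu hv hs hy t ht; have htu : t < size u by exact: leq_trans ht hs.
by rewrite hy // -hu // hv.
Qed.

Lemma incl_brick S m (b b' : brick S m) :
  (forall x, in_brick b x -> in_brick b' x) ->
  b.1 = b'.1 /\ forall s, sprefix (b'.2 s) (b.2 s).
Proof.
move=> H; split.
  by case: (H _ (in_canon b (fun _ _ => false))).
move=> s.
have key : forall c : Cantor, prefix_of (b'.2 s) (pre (b.2 s) c).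
  by move=> c; case: (H _ (in_canon b (fun _ => c))) => _ /(_ s).
split; last first.
  move=> t h1 h2; have := key (fun _ => false) t h1.
  by rewrite /pre h2 => ->.
rewrite leqNgt; apply/negP => hlt.
have := key (fun _ => ~~ nth false (b'.2 s) (size (b.2 s))) _ hlt.
rewrite /pre ltnn /=.
by case: (nth false _ _).
Qed.

Lemma inter_brick S m (b1 b2 : brick S m) x :
  fin_supp b1.2 -> fin_supp b2.2 -> in_brick b1 x -> in_brick b2 x ->
  exists b : brick S m, fin_supp b.2 /\
    (forall y, in_brick b y <-> in_brick b1 y /\ in_brick b2 y) /\
    forall s, size (b.2 s) <= maxn (size (b1.2 s)) (size (b2.2 s)).
Proof.
move=> [l1 hl1] [l2 hl2] [hx1 hx1'] [hx2 hx2'].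
exists (b1.1, fun s => if size (b1.2 s) <= size (b2.2 s) then b2.2 s else b1.2 s).
split; [|split].
- exists (l1 ++ l2) => s /=; case: ifP => _ h; apply List.in_or_app; auto.
- move=> y; split.
  + case=> /= hy1 hy2; split; split.
    * by [].
    * move=> s; have := hy2 s; case: ifP => // hs.
      exact: prefix_trans_short (hx2' s) (hx1' s) hs.
    * by rewrite hy1 -hx1 hx2.
    * move=> s; have := hy2 s; case: ifP => hs //.
      apply: prefix_trans_short (hx1' s) (hx2' s) _.
      by apply: ltnW; rewrite ltnNge hs.
  + case=> [[hy1 hy1'] [hy2 hy2']]; split => //= s; by case: ifP.
- move=> s /=; case: ifP => _; by rewrite ?leq_maxl ?leq_maxr.
Qed.

Lemma cubes_is_partition S m : is_partition (@cubes_partition S m).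
Proof.
split; first by move=> j; exists [::].
move=> x; exists x.1; split; first by split => // s t.
by move=> j [].
Qed.

Lemma dyadic_partition S m k (P : 'I_k -> brick S m) : dyadic P -> is_partition P.
Proof. case=> [|k0 P0 k1 P1 _ [] //]; exact: cubes_is_partition. Qed.

Lemma part_ex S m k (P : 'I_k -> brick S m) x : is_partition P -> exists j, in_brick (P j) x.
Proof. by case=> _ /(_ x) [j [h _]]; exists j. Qed.

Lemma part_uniq S m k (P : 'I_k -> brick S m) x j j' : is_partition P ->
  in_brick (P j) x -> in_brick (P j') x -> j = j'.
Proof. case=> _ /(_ x) [j0 [h0 u]] h h'; by rewrite -(u _ h) -(u _ h'). Qed.

Lemma dyadic_equiv S m k (P : 'I_k -> brick S m) k' (P' : 'I_k' -> brick S m) :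
  dyadic P -> (forall i, fin_supp (P' i).2) ->
  (forall j, exists i, forall x, in_brick (P j) x <-> in_brick (P' i) x) ->
  (forall i i' x, in_brick (P' i) x -> in_brick (P' i') x -> i = i') ->
  dyadic P'.
Proof.
move=> hP hf hj hu; apply: (dyadic_step hP); split.
  split => // x; have [j hx] := part_ex x (dyadic_partition hP).
  have [i hi] := hj j; exists i; split; first by apply/hi.
  by move=> i' h'; apply: hu (proj1 (hi x) hx) h'.
move=> j; have [i hi] := hj j; exists i, i => x; rewrite hi; tauto.
Qed.

Definition split_fam S m k (P : 'I_k -> brick S m) (i0 : 'I_k) (A B : brick S m)
  (i : 'I_k.+1) : brick S m :=
  match unlift ord_max i with Some i' => if i' == i0 then A else P i' | None => B end.

Lemma split_fam_lift S m k (P : 'I_k -> brick S m) i0 A B j :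
  split_fam P i0 A B (lift ord_max j) = if j == i0 then A else P j.
Proof. by rewrite /split_fam liftK. Qed.

Lemma split_fam_max S m k (P : 'I_k -> brick S m) i0 A B :
  split_fam P i0 A B ord_max = B.
Proof. by rewrite /split_fam unlift_none. Qed.

Lemma dyadic_split1 S m k (P : 'I_k -> brick S m) (i0 : 'I_k) (A B : brick S m) :
  dyadic P -> fin_supp A.2 -> fin_supp B.2 ->
  (forall x, in_brick (P i0) x <-> in_brick A x \/ in_brick B x) ->
  (forall x, in_brick A x -> in_brick B x -> False) ->
  dyadic (split_fam P i0 A B).
Proof.
move=> hP hA hB hAB hd; have hpart := dyadic_partition hP.
have sub : forall j x, in_brick (split_fam P i0 A B (lift ord_max j)) x -> in_brick (P j) x.
  move=> j x; rewrite split_fam_lift; case: eqP => [->|//] h; apply/hAB; by left.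
apply: (dyadic_step hP); split.
  split.
    move=> i; case: (unliftP ord_max i) => [j ->|->].
      by rewrite split_fam_lift; case: eqP => _ //; case: hpart.
    by rewrite split_fam_max.
  move=> x; have [j hx] := part_ex x hpart.
  have [i hi] : exists i, in_brick (split_fam P i0 A B i) x.
    case: (eqVneq j i0) => [ej|nj].
      rewrite ej in hx; case: (proj1 (hAB x) hx) => h.
        by exists (lift ord_max i0); rewrite split_fam_lift eqxx.
      by exists ord_max; rewrite split_fam_max.
    by exists (lift ord_max j); rewrite split_fam_lift (negbTE nj).
  exists i; split => // i' hi'.
  case: (unliftP ord_max i) hi => [j1 ->|->] h1;
  case: (unliftP ord_max i') hi' => [j2 ->|->] h2 //.
  - by rewrite (part_uniq hpart (sub _ _ h1) (sub _ _ h2)).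
  - rewrite split_fam_max in h2; have h2' : in_brick (P i0) x by apply/hAB; right.
    have e := part_uniq hpart (sub _ _ h1) h2'; rewrite e split_fam_lift eqxx in h1.
    by case: (hd _ h1 h2).
  - rewrite split_fam_max in h1; have h1' : in_brick (P i0) x by apply/hAB; right.
    have e := part_uniq hpart (sub _ _ h2) h1'; rewrite e split_fam_lift eqxx in h2.
    by case: (hd _ h2 h1).
move=> j; case: (eqVneq j i0) => [->|nj].
  exists (lift ord_max i0), ord_max => x.
  by rewrite split_fam_lift eqxx split_fam_max.
exists (lift ord_max j), (lift ord_max j) => x.
rewrite split_fam_lift (negbTE nj); tauto.
Qed.

Lemma dyadic_splitall S m k (P : 'I_k -> brick S m)
  (D : 'I_k -> option (brick S m * brick S m)) :
  dyadic P ->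
  (forall j A B, D j = Some (A, B) -> [/\ fin_supp A.2, fin_supp B.2,
      (forall x, in_brick (P j) x <-> in_brick A x \/ in_brick B x) &
      (forall x, in_brick A x -> in_brick B x -> False)]) ->
  exists k' (P' : 'I_k' -> brick S m), dyadic P' /\
    forall i, exists j, (D j = None /\ P' i = P j) \/
       (exists A B, D j = Some (A, B) /\ (P' i = A \/ P' i = B)).
Proof.
move=> hP hD.
suff : forall t, t <= k -> exists k' (P' : 'I_k' -> brick S m), dyadic P' /\
    forall i : 'I_k', exists j : 'I_k, ((t <= j \/ D j = None) /\ P' i = P j) \/
       (j < t /\ exists A B, D j = Some (A, B) /\ (P' i = A \/ P' i = B)).
  move=> /(_ k (leqnn k)) [k' [P' [hP' H]]]; exists k', P'; split => // i.
  have [j [[[hj|hj] e]|[_ h]]] := H i.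
  - by move: (ltn_ord j); rewrite ltnNge hj.
  - by exists j; left.
  - by exists j; right.
elim=> [_|t IH ht].
  exists k, P; split => // i; exists i; by left; split => //; left.
have [k' [P' [hP' H]]] := IH (ltnW ht).
have hpart' := dyadic_partition hP'; have hpart := dyadic_partition hP.
pose jt : 'I_k := Ordinal ht.
case eD: (D jt) => [[A B]|]; last first.
  exists k', P'; split => // i; have [j [[hj e]|[hj h]]] := H i.
    exists j; left; split => //; case: hj => hj; last by right.
    case: (eqVneq j jt) => [ej|nj]; first by right; rewrite ej.
    left; rewrite ltn_neqAle hj andbT; apply/eqP => e'.
    by move: nj; rewrite -(inj_eq val_inj) /= -e' eqxx.
  exists j; right; split => //; exact: ltnW.
have [fA fB hAB hd] := hD _ _ _ eD.
pose x := canon (P jt) (fun _ _ => false).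
have hx : in_brick (P jt) x by exact: in_canon.
have [i0 hi0] := part_ex x hpart'.
have e0 : P' i0 = P jt.
  have [j [[_ e]|[hj [A' [B' [eD' hAB']]]]]] := H i0.
    rewrite e in hi0 *; by rewrite (part_uniq hpart hi0 hx).
  have [_ _ hj' _] := hD _ _ _ eD'.
  have : in_brick (P j) x by apply/hj'; case: hAB' => <-; tauto.
  move/(part_uniq hpart)/(_ hx) => ej; by move: hj; rewrite ej /= ltnn.
exists k'.+1, (split_fam P' i0 A B); split.
  apply: dyadic_split1 => //; by rewrite e0.
move=> i; case: (unliftP ord_max i) => [i' ->|->]; last first.
  rewrite split_fam_max; exists jt; right; split => //; exists A, B; tauto.
rewrite split_fam_lift; case: ifP => [_|ni].
  exists jt; right; split => //; exists A, B; tauto.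
have [j [[hj e]|[hj h]]] := H i'.
  exists j; left; split => //; case: hj => hj; last by right.
  case: (eqVneq j jt) => [ej|nj].
    exfalso; move/negbT/eqP: ni; apply; apply: (part_uniq hpart' (x := x)) => //.
    by rewrite e ej.
  left; rewrite ltn_neqAle hj andbT; apply/eqP => e'.
  by move: nj; rewrite -(inj_eq val_inj) /= -e' eqxx.
exists j; right; split => //; exact: ltnW.
Qed.

Definition cid := constructive_indefinite_description.

Lemma lift_dyadic S m n (pi : pt S n -> pt S m) kR (R0 : 'I_kR -> brick S n)
  kQ (Q : 'I_kQ -> brick S m) :
  dyadic R0 -> dyadic Q ->
  (forall i0, exists c, forall y, in_brick (R0 i0) y -> (pi y).1 = c) ->
  (forall (B : brick S n) (C : brick S m), fin_supp B.2 -> fin_supp C.2 ->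
     (exists y, in_brick B y /\ in_brick C (pi y)) ->
     exists D : brick S n, fin_supp D.2 /\
       forall y, in_brick D y <-> in_brick B y /\ in_brick C (pi y)) ->
  exists k (R : 'I_k -> brick S n), dyadic R /\
    forall i, exists i0 c, forall y,
      in_brick (R i) y <-> in_brick (R0 i0) y /\ in_brick (Q c) (pi y).
Proof.
move=> hR0 hQ H0 Hpi; have hpart0 := dyadic_partition hR0.
elim: hQ => [|kq Q0 kq' Q1 hQ0 IH [hpart1 hvel]].
  exists kR, R0; split => // i; have [c hc] := H0 i; exists i, c => y; split.
    move=> h; split => //; split; [exact: hc | by move=> s t].
  by case.
have [k [R [hR inv]]] := IH.
pose Spec (i : 'I_k) (d : option (brick S n * brick S n)) :=
  exists i0, (d = None /\ exists c', forall y,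
      in_brick (R i) y <-> in_brick (R0 i0) y /\ in_brick (Q1 c') (pi y)) \/
    (exists A B c1 c2, d = Some (A, B) /\ fin_supp A.2 /\ fin_supp B.2 /\
       (forall y, in_brick A y <-> in_brick (R0 i0) y /\ in_brick (Q1 c1) (pi y)) /\
       (forall y, in_brick B y <-> in_brick (R0 i0) y /\ in_brick (Q1 c2) (pi y)) /\
       c1 <> c2 /\
       (forall y, in_brick (R i) y <-> in_brick A y \/ in_brick B y)).
have Hex : forall i, exists d, Spec i d.
  move=> i; have [i0 [c hc]] := inv i; have [c1 [c2 hc12]] := hvel c.
  have hfR0 := proj1 hpart0 i0.
  case: (classic (c1 = c2)) => [e|ne].
    exists None, i0; left; split => //; exists c1 => y; rewrite hc hc12 -e; tauto.
  case: (classic (exists y, in_brick (R0 i0) y /\ in_brick (Q1 c1) (pi y))) => [ex1|nx1];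
    last first.
    exists None, i0; left; split => //; exists c2 => y; rewrite hc hc12.
    split; last tauto.
    case=> h [h'|h']; last tauto; exfalso; apply: nx1; by exists y.
  case: (classic (exists y, in_brick (R0 i0) y /\ in_brick (Q1 c2) (pi y))) => [ex2|nx2];
    last first.
    exists None, i0; left; split => //; exists c1 => y; rewrite hc hc12.
    split; last tauto.
    case=> h [h'|h']; first tauto; exfalso; apply: nx2; by exists y.
  have [A [fA hA]] := Hpi _ _ hfR0 (proj1 hpart1 c1) ex1.
  have [B [fB hB]] := Hpi _ _ hfR0 (proj1 hpart1 c2) ex2.
  exists (Some (A, B)), i0; right; exists A, B, c1, c2.
  split; first done. split; first done. split; first done. split; first done.
  split; first done. split; first done. move=> y.
  rewrite hc hA hB hc12; tauto.
pose D i := proj1_sig (cid (Hex i)).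
have HD : forall i, Spec i (D i) := fun i => proj2_sig (cid (Hex i)).
have hS : forall j A B, D j = Some (A, B) -> [/\ fin_supp A.2, fin_supp B.2,
      (forall x, in_brick (R j) x <-> in_brick A x \/ in_brick B x) &
      (forall x, in_brick A x -> in_brick B x -> False)].
  move=> j A B eD; have [i0 [[eN _]|[A' [B' [c1 [c2 [eS [fA [fB [hA [hB [ne hu]]]]]]]]]]]] := HD j.
    by rewrite eD in eN.
  rewrite eD in eS; case: eS => -> ->; split => // y h1 h2; apply: ne.
  by apply: (part_uniq hpart1 (x := pi y)); [apply (proj1 (hA y) h1)| apply (proj1 (hB y) h2)].
have [k' [R' [hR' HR']]] := dyadic_splitall hR hS.
exists k', R'; split => // i.
have [j [[eN e]|[A [B [eS hAB]]]]] := HR' i.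
  have [i0 [[_ [c' hc']]|[A' [B' [c1 [c2 [eS [fA [fB [hA [hB [ne hu]]]]]]]]]]]] := HD j.
    by exists i0, c'; rewrite e.
  by rewrite eN in eS.
have [i0 [[eN _]|[A' [B' [c1 [c2 [eS' [fA [fB [hA [hB [ne hu]]]]]]]]]]]] := HD j.
  by rewrite eS in eN.
rewrite eS in eS'; case: eS' => eA eB; subst A' B'.
by case: hAB => ->; [exists i0, c1 | exists i0, c2].
Qed.

Lemma Hpi_id S m (B C : brick S m) : fin_supp B.2 -> fin_supp C.2 ->
  (exists y, in_brick B y /\ in_brick C y) ->
  exists D : brick S m, fin_supp D.2 /\ forall y, in_brick D y <-> in_brick B y /\ in_brick C y.
Proof.
move=> fB fC [y [h1 h2]]; have [D [fD [hD _]]] := inter_brick fB fC h1 h2.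
by exists D.
Qed.

Definition pushinv S m n (P : 'I_n -> brick S m) (y : pt S n) : pt S m := canon (P y.1) y.2.

Lemma compat_of_prefix u v z : prefix_of u (pre v z) -> compat u v.
Proof. by move=> h t h1 h2; rewrite -h // /pre h1. Qed.

Lemma Hpi_push S m n (P : 'I_n -> brick S m) (B : brick S n) (C : brick S m) :
  fin_supp B.2 -> fin_supp C.2 ->
  (exists y, in_brick B y /\ in_brick C (pushinv P y)) ->
  exists D : brick S n, fin_supp D.2 /\
    forall y, in_brick D y <-> in_brick B y /\ in_brick C (pushinv P y).
Proof.
move=> fB [lC hlC] [y0 [hy0 hc0]].
pose a := B.1.
pose E : brick S n := (a, fun s => drop (size ((P a).2 s)) (C.2 s)).
have ha : forall y, in_brick B y -> y.1 = a by move=> y [].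
have claim : forall y, in_brick B y -> (in_brick C (pushinv P y) <-> in_brick E y).
  move=> y hy; case: hc0 => hc01 hc02.
  rewrite /pushinv /in_brick /= (ha _ hy); rewrite /pushinv /= (ha _ hy0) in hc01 hc02.
  split; case=> h1 h2; split => // s.
  - by apply/pre_prefix; [exact: compat_of_prefix (hc02 s)|exact: h2].
  - by apply/pre_prefix; [exact: compat_of_prefix (hc02 s)|exact: h2].
have fE : fin_supp E.2.
  exists lC => s /= h; apply: hlC => e; by rewrite e in h.
have [D [fD [hD _]]] := inter_brick fB fE hy0 (proj1 (claim _ hy0) hc0).
exists D; split => // y; rewrite hD; split; case=> h1 h2; split => //.
  by apply/claim.
by apply/claim.
Qed.

Lemma pre_cat u w (x : Cantor) : pre u (pre w x) = pre (u ++ w) x.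
Proof.
apply: functional_extensionality => t; rewrite /pre size_cat nth_cat.
case: ifP => h1; first by rewrite (ltn_addr _ h1).
have hu : size u <= t by rewrite leqNgt h1.
by rewrite ltn_subLR // subnDA.
Qed.

Definition fspec S m n (P : 'I_n -> brick S m) (f : pt S m -> pt S n) :=
  forall j (k : cube S), f (canon (P j) k) = (j, k).

Lemma fspec_brick S m n (P : 'I_n -> brick S m) f x j :
  fspec P f -> in_brick (P j) x -> f x = (j, decode (P j) x).
Proof. by move=> hf hx; rewrite -{1}(canon_decode hx) hf. Qed.

Lemma fspec_fst S m n (P : 'I_n -> brick S m) f x j :
  dyadic P -> fspec P f -> ((f x).1 = j <-> in_brick (P j) x).
Proof.
move=> hP hf; have hpart := dyadic_partition hP.
have [j0 hj0] := part_ex x hpart; rewrite (fspec_brick hf hj0) /=.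
split; first by move=> <-.
by move=> h; apply: part_uniq hpart hj0 h.
Qed.

Lemma fspec_inv1 S m n (P : 'I_n -> brick S m) f x :
  dyadic P -> fspec P f -> pushinv P (f x) = x.
Proof.
move=> hP hf; have [j hj] := part_ex x (dyadic_partition hP).
by rewrite (fspec_brick hf hj) /pushinv /= canon_decode.
Qed.

Lemma fspec_inv2 S m n (P : 'I_n -> brick S m) f y :
  fspec P f -> f (pushinv P y) = y.
Proof. by case: y => j k hf; rewrite /pushinv hf. Qed.

Lemma twisted_perm_id S (G : (S -> S) -> Prop) n : G id -> twisted_perm G (@id (pt S n)).
Proof.
move=> hG; exists id, (fun _ => id); split => //; first by exists id.
Qed.

Lemma same_class_refl S (G : (S -> S) -> Prop) m n (h : pt S m -> pt S n) : G id ->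
  same_class G h h.
Proof. by move=> hG; exists id; split => //; apply: twisted_perm_id. Qed.

Lemma fspec_sv S (G : (S -> S) -> Prop) m n (P : 'I_n -> brick S m) f :
  G id -> 0 < m -> dyadic P -> fspec P f -> sv G f.
Proof.
move=> hG hm hP hf; have hpart := dyadic_partition hP.
split => //; split.
  have [j _] := part_ex (Ordinal hm, fun _ _ => false) hpart.
  by case: j => j hj; exact: leq_ltn_trans (leq0n j) hj.
split; first by exists (pushinv P) => y; [apply: fspec_inv1 | apply: fspec_inv2].
exists n, P, (@cubes_partition S n), (fun _ => id); split => //.
  exact: cubes_is_partition.
move=> j k; rewrite hf /=; split => // s; by rewrite pre_nil.
Qed.

Lemma mkforest S m k (Q : 'I_k -> brick S m) : dyadic Q ->
  exists g : pt S m -> pt S k, fspec Q g.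
Proof.
move=> hQ; have hpart := dyadic_partition hQ.
pose J x := proj1_sig (cid (part_ex x hpart)).
have HJ : forall x, in_brick (Q (J x)) x := fun x => proj2_sig (cid (part_ex x hpart)).
exists (fun x => (J x, decode (Q (J x)) x)) => j kk.
have e : J (canon (Q j) kk) = j by apply: part_uniq hpart (HJ _) (in_canon _ _).
by rewrite e decode_canon.
Qed.

Lemma same_class_fst S (G : (S -> S) -> Prop) m n (h1 h2 : pt S m -> pt S n) :
  same_class G h1 h2 -> exists sigma : 'I_n -> 'I_n, injective sigma /\
    forall x, (h2 x).1 = sigma (h1 x).1.
Proof.
case=> q [[sigma [g [hs _ hq]]] e]; exists sigma; split.
  exact: bij_inj.
move=> x; rewrite e; case: (h1 x) => i k; by case: (hq i k).
Qed.

Lemma refine_of_le S (G : (S -> S) -> Prop) m n1 n (P1 : 'I_n1 -> brick S m) f1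
  (Pf : 'I_n -> brick S m) f :
  dyadic P1 -> fspec P1 f1 -> dyadic Pf -> fspec Pf f -> class_le G f1 f ->
  forall c, exists a, forall x, in_brick (Pf c) x -> in_brick (P1 a) x.
Proof.
move=> hP1 hf1 hPf hf [h [fa [_ [Pa [hPa hfa]] sc1 sc2]]] c.
have [s1 [i1 e1]] := same_class_fst sc1.
have [s2 [i2 e2]] := same_class_fst sc2.
pose x0 := canon (Pf c) (fun _ _ => false).
exists (f1 x0).1 => x hx; apply/(fspec_fst _ _ hP1 hf1); apply: i1.
rewrite -!e1.
have hx0 : in_brick (Pf c) x0 by exact: in_canon.
have ef : (f x).1 = (f x0).1 by rewrite (proj2 (fspec_fst _ _ hPf hf) hx) (proj2 (fspec_fst _ _ hPf hf) hx0).
have eb : (fa (h x)).1 = (fa (h x0)).1 by rewrite !e2 ef.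
have hb0 : in_brick (Pa (fa (h x0)).1) (h x0) by apply/(fspec_fst _ _ hPa hfa).
have hb : in_brick (Pa (fa (h x0)).1) (h x) by apply/(fspec_fst _ _ hPa hfa).
by rewrite (proj1 hb) (proj1 hb0).
Qed.

Lemma same_class_sub S (G : (S -> S) -> Prop) m n (P1 : 'I_n -> brick S m) f1
  (Pe : 'I_n -> brick S m) e :
  dyadic P1 -> fspec P1 f1 -> dyadic Pe -> fspec Pe e -> same_class G f1 e ->
  forall a, exists b, forall x, in_brick (Pe b) x -> in_brick (P1 a) x.
Proof.
move=> hP1 hf1 hPe he sc a; have [s [i es]] := same_class_fst sc.
exists (s a) => x hx; apply/(fspec_fst _ _ hP1 hf1); apply: i; rewrite -es.
by apply/(fspec_fst _ _ hPe he).
Qed.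

Lemma shift_pre' n w x : size w = n -> shift n (pre w x) = x.
Proof. by move=> <-; apply: shift_pre. Qed.

Lemma le_of_refine S (G : (S -> S) -> Prop) m n1 n (P1 : 'I_n1 -> brick S m) f1
  (Pf : 'I_n -> brick S m) f :
  G id -> 0 < m -> dyadic P1 -> fspec P1 f1 -> dyadic Pf -> fspec Pf f ->
  (forall c, exists a, forall x, in_brick (Pf c) x -> in_brick (P1 a) x) ->
  class_le G f1 f.
Proof.
move=> hG hm hP1 hf1 hPf hf href.
have hpart1 := dyadic_partition hP1; have hpartf := dyadic_partition hPf.
pose A c := proj1_sig (cid (href c)).
have HA : forall c x, in_brick (Pf c) x -> in_brick (P1 (A c)) x :=
  fun c => proj2_sig (cid (href c)).
pose R' c : brick S n1 := (A c, fun s => drop (size ((P1 (A c)).2 s)) ((Pf c).2 s)).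
have Rmem : forall c y, in_brick (R' c) y <->
    y.1 = A c /\ in_brick (Pf c) (pushinv P1 y).
  move=> c y; have [e1 hs] := incl_brick (HA c).
  rewrite /in_brick /pushinv /=; split; case=> h1 h2; split => //.
    rewrite h1 -e1; split => // s; apply/pre_prefix; first by case: (hs s).
    exact: h2.
  move=> s; rewrite h1 in h2; apply/pre_prefix; first by case: (hs s).
  by case: h2 => _ /(_ s).
have fR' : forall c, fin_supp (R' c).2.
  move=> c; case: (proj1 hpartf c) => l hl; exists l => s /= h; apply: hl => e.
  by rewrite e in h.
have hR' : dyadic R'.
  have H0 : forall i0, exists c, forall y,
      in_brick (@cubes_partition S n1 i0) y -> (pushinv P1 y).1 = c.
    by move=> i0; exists (P1 i0).1 => y [hy _]; rewrite /pushinv hy.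
  have [k [R [hR inv]]] := lift_dyadic (dyadic_base S n1) hPf H0 (@Hpi_push S m n1 P1).
  apply: (dyadic_equiv hR fR').
    move=> i; have [i0 [c hc]] := inv i; exists c.
    have [[hy01 _] hy02] := proj1 (hc _) (in_canon (R i) (fun _ _ => false)).
    simpl in hy01.
    have ea : A c = i0.
      have h1 := HA _ _ hy02.
      have h2 : in_brick (P1 (canon (R i) (fun _ _ => false)).1)
          (pushinv P1 (canon (R i) (fun _ _ => false))) by exact: in_canon.
      by rewrite -hy01 (part_uniq hpart1 h1 h2).
    move=> y; rewrite hc Rmem ea; split.
      by case=> [[h1 _] h2].
    by case=> h1 h2; split => //; split => // s t.
  move=> c c' y /Rmem [_ h1] /Rmem [_ h2]; exact: part_uniq hpartf h1 h2.
exists f1, (fun y => f (pushinv P1 y)); split.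
- exact: fspec_sv hG hm hP1 hf1.
- exists R'; split => // j k.
  have hp := proj2 (proj1 (Rmem j _) (in_canon (R' j) k)).
  rewrite (fspec_brick hf hp); congr pair.
  apply: functional_extensionality => s.
  have [_ hs] := incl_brick (HA j).
  rewrite /decode /pushinv /= pre_cat; apply: shift_pre'.
  rewrite size_cat size_drop subnKC //; by case: (hs s).
- exact: same_class_refl.
- exists id; split; first exact: twisted_perm_id.
  by move=> x; rewrite fspec_inv1.
Qed.

Theorem proposition5p3 (S : Type) (G : (S -> S) -> Prop) (m : nat) :
  inhabited S -> is_perm_subgroup G -> 0 < m ->
  forall (n1 n2 : nat) (f1 : pt S m -> pt S n1) (f2 : pt S m -> pt S n2),
    forest f1 -> forest f2 ->
    (exists (n : nat) (g : pt S m -> pt S n), is_lub_Fm G f1 f2 g) /\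
    ((exists e1 : pt S m -> pt S n1, elem_forest e1 /\ same_class G f1 e1) ->
     (exists e2 : pt S m -> pt S n2, elem_forest e2 /\ same_class G f2 e2) ->
     forall (n : nat) (g : pt S m -> pt S n), is_lub_Fm G f1 f2 g ->
       exists e : pt S m -> pt S n, elem_forest e /\ same_class G g e).
Proof.
move=> _ [_ hG _ _] hm n1 n2 f1 f2 [P1 [hP1 hf1]] [P2 [hP2 hf2]].
have hpart1 := dyadic_partition hP1; have hpart2 := dyadic_partition hP2.
have H0 : forall i0, exists c, forall y, in_brick (P1 i0) y -> (id y).1 = c.
  by move=> i0; exists (P1 i0).1 => y [].
have [k [Q [hQ invQ]]] := lift_dyadic hP1 hP2 H0 (@Hpi_id S m).
have hpartQ := dyadic_partition hQ.
have [g hg] := mkforest hQ.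
have Qsub1 : forall i, exists a, forall x, in_brick (Q i) x -> in_brick (P1 a) x.
  move=> i; have [a [c hc]] := invQ i; exists a => x /hc; by case.
have Qsub2 : forall i, exists a, forall x, in_brick (Q i) x -> in_brick (P2 a) x.
  move=> i; have [a [c hc]] := invQ i; exists c => x /hc; by case.
have ub1 : class_le G f1 g := le_of_refine hG hm hP1 hf1 hQ hg Qsub1.
have ub2 : class_le G f2 g := le_of_refine hG hm hP2 hf2 hQ hg Qsub2.
have least : forall n' (f : pt S m -> pt S n'), forest f -> class_le G f1 f ->
    class_le G f2 f -> class_le G g f.
  move=> n' f [Pf [hPf hff]] l1 l2.
  have r1 := refine_of_le hP1 hf1 hPf hff l1.
  have r2 := refine_of_le hP2 hf2 hPf hff l2.
  apply: (le_of_refine hG hm hQ hg hPf hff) => c.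
  have [a ha] := r1 c; have [b hb] := r2 c.
  have hx0 := in_canon (Pf c) (fun _ _ => false).
  have [i hi] := part_ex (canon (Pf c) (fun _ _ => false)) hpartQ.
  have [a' [b' hab]] := invQ i.
  have [h1 h2] := proj1 (hab _) hi.
  have ea := part_uniq hpart1 (ha _ hx0) h1.
  have eb := part_uniq hpart2 (hb _ hx0) h2.
  exists i => x hx; apply/hab; rewrite -ea -eb; split; [exact: ha | exact: hb].
have lub : is_lub_Fm G f1 f2 g.
  split => //; by exists Q.
split; first by exists k, g.
move=> [e1 [[Pe1 [hPe1 [sz1 he1]]] sc1]] [e2 [[Pe2 [hPe2 [sz2 he2]]] sc2]].
move=> n g' [[Pg [hPg hfg]] l1' l2' least'].
have sP1 : forall a s, size ((P1 a).2 s) <= 1.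
  move=> a s; have [b hb] := same_class_sub hP1 hf1 hPe1 he1 sc1 a.
  have [_ hs] := incl_brick hb; case: (hs s) => hs1 _.
  exact: leq_trans hs1 (sz1 b s).
have sP2 : forall a s, size ((P2 a).2 s) <= 1.
  move=> a s; have [b hb] := same_class_sub hP2 hf2 hPe2 he2 sc2 a.
  have [_ hs] := incl_brick hb; case: (hs s) => hs1 _.
  exact: leq_trans hs1 (sz2 b s).
have sQ : forall i s, size ((Q i).2 s) <= 1.
  move=> i s; have [a [c hc]] := invQ i.
  have [h1 h2] := proj1 (hc _) (in_canon (Q i) (fun _ _ => false)).
  have [I [_ [hI sI]]] := inter_brick (proj1 hpart1 a) (proj1 hpart2 c) h1 h2.
  have hIQ : forall x, in_brick I x -> in_brick (Q i) x.
    by move=> x /hI hx; apply/hc.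
  have [_ hs] := incl_brick hIQ; case: (hs s) => hs1 _.
  apply: leq_trans hs1 (leq_trans (sI s) _).
  by rewrite geq_max sP1 sP2.
have le1 : class_le G g' g := least' k g (ex_intro _ Q (conj hQ hg)) ub1 ub2.
have le2 : class_le G g g' := least n g' (ex_intro _ Pg (conj hPg hfg)) l1' l2'.
have r1 := refine_of_le hQ hg hPg hfg le2.
have r2 := refine_of_le hPg hfg hQ hg le1.
have hpartg := dyadic_partition hPg.
exists g'; split; last exact: same_class_refl.
exists Pg; split => //; split => // j s.
have [i hi] := r1 j; have [c hc] := r2 i.
have hx0 := in_canon (Pg j) (fun _ _ => false).
have ec := part_uniq hpartg (hc _ (hi _ hx0)) hx0.
rewrite ec in hc.
have [_ hs] := incl_brick hc; case: (hs s) => hs1 _.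
exact: leq_trans hs1 (sQ i s).
Qed.
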